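(* In the two-period, two-sequence crossover design ($T=2$, $\mathcal{S}^{\mathrm{obs}}=\{AB,BA\}$, $N_{AB},N_{BA}\ge1$) under complete randomization, suppose Assumption 1 holds. Then the only unbiased linear estimator of $\tau_1$ is $\widehat Y_1(AB)-\widehat Y_1(BA)$, and for each $z\in\{A,B\}$ there is no unbiased linear estimator of $\tau_2(z)$ nor of $\tau_2^1(z)$.
   Context: Setup: $N$ units, treatments $A,B$, $T$ periods; sequences $\vec z\in\{A,B\}^T$, $\vec z_{[t_1,t_2]}=z_{t_1}\cdots z_{t_2}$. Complete randomization: fixed positive group sizes $N_{\vec z}$ for $\vec z\in\mathcal{S}^{\mathrm{obs}}$ summing to $N$, assignment uniform over assignments with these group sizes. Fixed potential outcomes $Y_{it}(\vec z)$ for all $\vec z\in\{A,B\}^T$ (including unimplemented sequences); observed $Y_{it}=Y_{it}(\vec Z_i)$; randomness only from assignment. $\bar Y_t(\vec z)=N^{-1}\sum_iY_{it}(\vec z)$, $\widehat Y_t(\vec z)=N_{\vec z}^{-1}\sum_iY_{it}\mathbf1(\vec Z_i=\vec z)$. Assumption 1 (no anticipation): $Y_{it}(\vec z)=Y_{it}(\vec z')$ whenever $\vec z_{[1,t]}=\vec z'_{[1,t]}$. Estimands: $\tau_1=\bar Y_1(A)-\bar Y_1(B)$, $\tau_2(z_1)=\bar Y_2(z_1A)-\bar Y_2(z_1B)$, $\tau_2^1(z_2)=\bar Y_2(Az_2)-\bar Y_2(Bz_2)$. A linear estimator is $\sum_{t=1}^2\sum_{\vec z\in\mathcal{S}^{\mathrm{obs}}}\tilde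 w_t(\vec z)\widehat Y_t(\vec z)$ with non-random real weights; it is unbiased for an estimand if its expectation equals the estimand for every finite population of potential outcomes satisfying the stated assumptions. *)

(* Defs.v *)
From HB Require Import structures.
From mathcomp Require Import all_boot all_order all_algebra.
Set Implicit Arguments. Unset Strict Implicit. Unset Printing Implicit Defensive.
Import Order.TTheory GRing.Theory Num.Theory.
Local Open Scope ring_scope.

Inductive trt := A | B.

Definition trt2bool (x : trt) : bool := if x is A then true else false.
Definition bool2trt (b : bool) : trt := if b then A else B.
Lemma trt2boolK : cancel trt2bool bool2trt. Proof. by case. Qed.
HB.instance Definition _ := Finite.copy trt (can_type trt2boolK).

Definition tseq := (trt * trt)%type.
Definition AB : tseq := (A, B).
Definition BA : tseq := (B, A).

Definition Sobs : seq tseq := [:: AB; BA].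

Notation Nunits nAB nBA := (nAB + nBA)%N.

(* Potential outcomes Y_{it}(z), periods t = 1, 2 (as nat), all z in {A,B}^2. *)
Definition pot_out (R : Type) (N : nat) := 'I_N -> nat -> tseq -> R.

(* Assumption 1 (no anticipation) for T = 2: for t = 1 the potential outcome
   depends only on z_1; for t = 2 the condition z_[1,2] = z'_[1,2] is z = z'
   and hence vacuous. *)
Definition no_anticipation (R : Type) (N : nat) (Y : pot_out R N) : Prop :=
  forall (i : 'I_N) (z z' : tseq), z.1 = z'.1 -> Y i 1%N z = Y i 1%N z'.

Definition Nz (nAB nBA : nat) (z : tseq) : nat :=
  if z == AB then nAB else if z == BA then nBA else 0%N.

Definition admissible (nAB nBA : nat) (Z : {ffun 'I_(Nunits nAB nBA) -> tseq}) : bool :=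
  [forall i, Z i \in Sobs] &&
  (#|[set i | Z i == AB]| == nAB) && (#|[set i | Z i == BA]| == nBA).

Definition Expect (R : fieldType) (nAB nBA : nat)
    (f : {ffun 'I_(Nunits nAB nBA) -> tseq} -> R) : R :=
  (#|[pred Z | @admissible nAB nBA Z]|%:R)^-1 *
  \sum_(Z | @admissible nAB nBA Z) f Z.

Definition Ybar (R : fieldType) (N : nat) (Y : pot_out R N) (t : nat) (z : tseq) : R :=
  (N%:R)^-1 * \sum_(i < N) Y i t z.

Definition Yhat (R : fieldType) (nAB nBA : nat) (Y : pot_out R (Nunits nAB nBA))
    (Z : {ffun 'I_(Nunits nAB nBA) -> tseq}) (t : nat) (z : tseq) : R :=
  ((Nz nAB nBA z)%:R)^-1 *
  \sum_(i < Nunits nAB nBA) (Y i t (Z i) * (Z i == z)%:R).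

Definition lin_est (R : fieldType) (nAB nBA : nat) (w : nat -> tseq -> R)
    (Y : pot_out R (Nunits nAB nBA)) (Z : {ffun 'I_(Nunits nAB nBA) -> tseq}) : R :=
  \sum_(t <- [:: 1%N; 2%N]) \sum_(z <- Sobs) w t z * Yhat Y Z t z.

Definition unbiased (R : fieldType) (nAB nBA : nat) (w : nat -> tseq -> R)
    (tau : pot_out R (Nunits nAB nBA) -> R) : Prop :=
  forall Y : pot_out R (Nunits nAB nBA), no_anticipation Y ->
    Expect (fun Z => lin_est w Y Z) = tau Y.

Definition tau1 (R : fieldType) (N : nat) (Y : pot_out R N) : R :=
  Ybar Y 1%N (A, A) - Ybar Y 1%N (B, B).
Definition tau2 (R : fieldType) (N : nat) (z1 : trt) (Y : pot_out R N) : R :=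
  Ybar Y 2%N (z1, A) - Ybar Y 2%N (z1, B).
Definition tau21 (R : fieldType) (N : nat) (z2 : trt) (Y : pot_out R N) : R :=
  Ybar Y 2%N (A, z2) - Ybar Y 2%N (B, z2).

(* Main.v *)
Require Import Defs.
From HB Require Import structures.
From mathcomp Require Import all_boot all_order all_algebra.
From mathcomp Require Import all_fingroup.
From mathcomp Require Import ring.
Import Order.TTheory GRing.Theory Num.Theory.

Section S.
Variables nAB nBA : nat.
Local Notation N := (Nunits nAB nBA).
Local Notation adm := (@admissible nAB nBA).

Definition hperm (s : {perm 'I_N}) (Z : {ffun 'I_N -> tseq}) : {ffun 'I_N -> tseq} :=
  [ffun k => Z (s k)].

Lemma adm_perm s Z : adm (hperm s Z) = adm Z.
Proof.
rewrite /admissible.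
have Hc : forall z, #|[set i | hperm s Z i == z]| = #|[set i | Z i == z]|.
  move=> z; have -> : [set i | hperm s Z i == z] = s @^-1: [set i | Z i == z].
    by apply/setP=> k; rewrite !inE ffunE.
  by rewrite card_preimset //; apply: perm_inj.
rewrite !Hc; congr (_ && _ && _).
apply/forallP/forallP => H k.
  by move: (H (s^-1 k)%g); rewrite ffunE permKV.
by rewrite ffunE.
Qed.

Lemma count_eq i j z :
  \sum_(Z | adm Z) (Z i == z) = \sum_(Z | adm Z) (Z j == z).
Proof.
set s := tperm i j.
have hK : involutive (hperm s).
  by move=> Z; apply/ffunP=> k; rewrite !ffunE tpermK.
rewrite (reindex_inj (inv_inj hK)) /=.
apply: eq_big => Z; first by rewrite adm_perm.
by rewrite ffunE tpermL.
Qed.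

Lemma count_val i z : z \in Sobs ->
  (N * \sum_(Z | adm Z) (Z i == z) = Nz nAB nBA z * #|[pred Z | adm Z]|)%N.
Proof.
move=> hz.
have -> : (N * \sum_(Z | adm Z) (Z i == z) = \sum_(k < N) \sum_(Z | adm Z) (Z k == z))%N.
  rewrite [RHS](eq_bigr (fun _ => \sum_(Z | adm Z) (Z i == z))); last by move=> k _; exact: (count_eq k i z).
  by rewrite sum_nat_const card_ord.
rewrite exchange_big /=.
rewrite (eq_bigr (fun _ => Nz nAB nBA z)); last first.
  move=> Z /andP [/andP [_ /eqP h1] /eqP h2].
  have -> : (\sum_(k < N) (Z k == z) = \sum_(k | Z k == z) 1)%N.
    by rewrite [RHS]big_mkcond /=; apply: eq_bigr => k _; case: (Z k == z).
  rewrite sum1dep_card.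
  move: hz; rewrite !inE => /orP [] /eqP ->; by rewrite /Nz /= ?h1 ?h2.
by rewrite mulnC -sum_nat_const; apply: eq_bigl => Z; rewrite inE.
Qed.

Local Open Scope ring_scope.

Lemma adm_exists : (0 < #|[pred Z | adm Z]|)%N.
Proof.
apply/card_gt0P.
set Z0 := [ffun k : 'I_N => if (k < nAB)%N then AB else BA].
exists Z0.
rewrite inE /admissible.
set S := [set i : 'I_N | (i < nAB)%N].
have hS : #|S| = nAB.
  rewrite -sum1dep_card.
  by rewrite -(big_ord_widen _ (fun _ => 1%N) (leq_addr nBA nAB)) sum_nat_const card_ord muln1.
have e1 : [set i | Z0 i == AB] = S.
  by apply/setP => i; rewrite !inE ffunE; case: (i < nAB)%N.
have e2 : [set i | Z0 i == BA] = ~: S.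
  by apply/setP => i; rewrite !inE ffunE; case: (i < nAB)%N.
have h2 : #|~: S| = nBA.
  have := cardsC S; rewrite hS card_ord => /eqP; rewrite eqn_add2l => /eqP //.
rewrite e1 e2 hS h2 !eqxx !andbT.
by apply/forallP => k; rewrite ffunE; case: (k < nAB)%N.
Qed.

Variable R : realFieldType.

Hypothesis hA : (0 < nAB)%N.
Hypothesis hB : (0 < nBA)%N.

Lemma EYhat (Y : pot_out R N) t z : z \in Sobs ->
  Expect (fun Z => Yhat Y Z t z) = Ybar Y t z.
Proof.
move=> hz.
have hNz : (Nz nAB nBA z)%:R != 0 :> R.
  rewrite pnatr_eq0 -lt0n.
  by move: hz; rewrite !inE => /orP [] /eqP ->; rewrite /Nz /= ?eqxx.
have hN : (N%:R : R) != 0 by rewrite pnatr_eq0 -lt0n addn_gt0 hA.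
have hM : (#|[pred Z | adm Z]|%:R : R) != 0 by rewrite pnatr_eq0 -lt0n adm_exists.
set M := #|[pred Z | adm Z]|.
have hc : forall i, (\sum_(Z | adm Z) ((Z i == z)%:R : R)) =
     (Nz nAB nBA z)%:R * M%:R / N%:R.
  move=> i; rewrite -natr_sum; apply: (mulfI hN).
  rewrite -[LHS]natrM count_val // natrM; field; by rewrite -natrD.
rewrite /Expect /Yhat /Ybar -/M.
rewrite (eq_bigr (fun Z : {ffun 'I_N -> tseq} => (Nz nAB nBA z)%:R^-1 *
   \sum_(i < N) (Y i t z * (Z i == z)%:R))); last first.
  move=> Z _; congr (_ * _); apply: eq_bigr => i _.
  by case: eqP => [->|_]; rewrite ?mulr0.
rewrite -mulr_sumr exchange_big /=.
rewrite (eq_bigr (fun i => Y i t z * ((Nz nAB nBA z)%:R * M%:R / N%:R))); last first.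
  by move=> i _; rewrite -mulr_sumr hc.
rewrite -mulr_suml.
by field; rewrite ?hNz ?hM //= -natrD andbT.
Qed.

Lemma Expect_ext (f g : {ffun 'I_N -> tseq} -> R) :
  (forall Z, f Z = g Z) -> Expect f = Expect g.
Proof. by move=> H; rewrite /Expect; congr (_ * _); apply: eq_bigr. Qed.

Lemma ExpectD (f g : {ffun 'I_N -> tseq} -> R) :
  Expect (fun Z => f Z + g Z) = Expect f + Expect g.
Proof. by rewrite /Expect big_split mulrDr. Qed.

Lemma ExpectZ c (f : {ffun 'I_N -> tseq} -> R) :
  Expect (fun Z => c * f Z) = c * Expect f.
Proof. by rewrite /Expect -mulr_sumr mulrCA. Qed.

Lemma Elin (w : nat -> tseq -> R) (Y : pot_out R N) :
  Expect (fun Z => lin_est w Y Z) =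
  w 1%N AB * Ybar Y 1 AB + w 1%N BA * Ybar Y 1 BA +
  (w 2%N AB * Ybar Y 2 AB + w 2%N BA * Ybar Y 2 BA).
Proof.
rewrite (@Expect_ext _ (fun Z => (w 1%N AB * Yhat Y Z 1 AB + w 1%N BA * Yhat Y Z 1 BA) +
  (w 2%N AB * Yhat Y Z 2 AB + w 2%N BA * Yhat Y Z 2 BA))); last first.
  by move=> Z; rewrite /lin_est !big_cons !big_nil !addr0.
have EZ : forall c t z, z \in Sobs -> Expect (fun Z => c * Yhat Y Z t z) = c * Ybar Y t z.
  by move=> c t z hz; rewrite (ExpectZ c (fun Z => Yhat Y Z t z)) EYhat.
by rewrite !ExpectD !EZ // !inE eqxx ?orbT.
Qed.
End S.

Local Open Scope ring_scope.

Lemma Ybar_const (R : realFieldType) (N : nat) (f : nat -> tseq -> R) t z :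
  (0 < N)%N -> Ybar (fun (_ : 'I_N) t z => f t z) t z = f t z.
Proof.
move=> hN; rewrite /Ybar sumr_const card_ord -mulr_natr; field.
by rewrite pnatr_eq0 -lt0n.
Qed.

Theorem proposition4 (R : realFieldType) (nAB nBA : nat) :
  (0 < nAB)%N -> (0 < nBA)%N ->
  (forall w : nat -> tseq -> R,
     unbiased w (@tau1 R (Nunits nAB nBA)) <->
     [/\ w 1%N AB = 1, w 1%N BA = -1, w 2%N AB = 0 & w 2%N BA = 0]) /\
  (forall (z : trt) (w : nat -> tseq -> R),
     ~ unbiased w (@tau2 R (Nunits nAB nBA) z)) /\
  (forall (z : trt) (w : nat -> tseq -> R),
     ~ unbiased w (@tau21 R (Nunits nAB nBA) z)).
Proof.
move=> hA hB.
have hN : (0 < Nunits nAB nBA)%N by rewrite addn_gt0 hA.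
pose Yc (g : trt -> R) (h : tseq -> R) : pot_out R (Nunits nAB nBA) :=
  fun _ t z => if t == 1%N then g z.1 else h z.
have NAc : forall g h, no_anticipation (Yc g h).
  by move=> g h i z z' hz; rewrite /Yc /= hz.
have Ebar : forall g h t z, Ybar (Yc g h) t z = if t == 1%N then g z.1 else h z.
  move=> g h t z; rewrite /Ybar /Yc sumr_const card_ord -mulr_natr; field.
  by rewrite -natrD pnatr_eq0 -lt0n.
pose diag (z : trt) (z' : tseq) : R :=
  match z, z' with A, (A, A) => 1 | B, (B, B) => 1 | _, _ => 0 end.
split; [|split].
- move=> w; split.
  + move=> H.
    have T : forall g h, w 1%N AB * g A + w 1%N BA * g B + (w 2%N AB * h AB + w 2%N BA * h BA)
                        = g A - g B.
      move=> g h; have := H (Yc g h) (NAc g h).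
      by rewrite Elin // /tau1 !Ebar.
    have T1 := T (fun x => if x is A then 1 else 0) (fun _ => 0).
    have T2 := T (fun x => if x is A then 0 else 1) (fun _ => 0).
    have T3 := T (fun _ => 0) (fun z => if z is (A, B) then 1 else 0).
    have T4 := T (fun _ => 0) (fun z => if z is (B, A) then 1 else 0).
    move: T1 T2 T3 T4 => /=; rewrite !mulr1 !mulr0 !addr0 ?add0r ?subr0 ?sub0r ?oppr0.
    by move=> -> -> -> ->.
  + case=> h1 h2 h3 h4 Y NA.
    rewrite Elin // h1 h2 h3 h4 !mul0r !addr0 mul1r mulN1r /tau1.
    congr (_ - _); rewrite /Ybar; congr (_ * _); apply: eq_bigr => i _; exact: NA.
- move=> z w H; have := H (Yc (fun _ => 0) (diag z)) (NAc _ _).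
  rewrite Elin // /tau2 !Ebar /=; clear H.
  by case: z => /=; rewrite !mulr0 !addr0 ?subr0 ?sub0r => /eqP; rewrite eq_sym ?oppr_eq0 oner_eq0.
- move=> z w H; have := H (Yc (fun _ => 0) (diag z)) (NAc _ _).
  rewrite Elin // /tau21 !Ebar /=; clear H.
  by case: z => /=; rewrite !mulr0 !addr0 ?subr0 ?sub0r => /eqP; rewrite eq_sym ?oppr_eq0 oner_eq0.
Qed.
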